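(* Let $(A,E)$ be a $B$-valued Banach noncommutative probability space, $a\in A$ with $E(a)$ invertible, $N\in\mathbb N$, and fix $i\in I$ in the Fock space setting below. Let $\alpha_0=E(a)$. Then there exist $\alpha_n\in\mathcal B_n(B)$, $n=1,\ldots,N$, such that with \[ X=\sum_{n=0}^N\big(V_{i,n}(\alpha_n)+W_{i,n}(\alpha_n)\big)\in\mathcal B(\mathcal F) \] one has $\mathcal E(b_0Xb_1X\cdots b_kX)=E(b_0ab_1a\cdots b_ka)$ for all $k\in\{1,\ldots,N\}$ and all $b_0,\ldots,b_k\in B$ (with $b_j$ acting on $\mathcal F$ as $\lambda(b_j)$).
   Context: A $B$-valued Banach noncommutative probability space is a pair $(A,E)$ where $A$ is a unital Banach algebra containing an isometric copy of the unital complex Banach algebra $B$ as a unital subalgebra and $E:A\to B$ is a bounded projection with $E(b_1ab_2)=b_1E(a)b_2$. Fock space setting: $I$ a set, $\mathbb N=\{1,2,\ldots\}$; $D=\ell^1(I,B)$ (functions $d:I\to B$ with $\sum_i\|d(i)\|<\infty$, left action $(bd)(i)=b\,d(i)$, $\delta_i$ the function $1$ at $i$, $0$ elsewhere); $\mathcal F=B\Omega\oplus\bigoplus_{k\ge1}D^{\hat\otimes k}\hat\otimes B$ ($\ell^1$-sum of projective tensor products, $\Omega$ the unit of the copy $B\Omega$ of $B$); $\lambda(b)$: $b_0\Omega\mapsto(bb_0)\Omega$, $d_1\otimes\cdots\otimes d_k\otimes b_0\mapsto(bd_1)\otimes\cdots\otimes d_k\otimes b_0$; $P$ the projection onto $B\Omega$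 killing other summands, $\mathcal E(X)=P(X\Omega)$; $L_i$: $b_0\Omega\mapsto\delta_i\otimes b_0$, $d_1\otimes\cdots\otimes b_0\mapsto\delta_i\otimes d_1\otimes\cdots\otimes b_0$. $\mathcal B_n(B)$ = bounded multilinear maps $B^n\to B$, $\mathcal B_0(B)=B$. For $n\ge1$, $V_{i,n}(\alpha_n)$, $W_{i,n}(\alpha_n)$ vanish on $B\Omega$ and on $d_1\otimes\cdots\otimes d_k\otimes b_0$ with $k<n$; for $k=n$ they give $\alpha_n(d_1(i),\ldots,d_n(i))b_0\Omega$ resp. $\alpha_n(d_1(i),\ldots,d_n(i))\delta_i\otimes b_0$; for $k>n$ they give $\alpha_n(d_1(i),\ldots,d_n(i))d_{n+1}\otimes\cdots\otimes d_k\otimes b_0$ resp. $\alpha_n(d_1(i),\ldots,d_n(i))\delta_i\otimes d_{n+1}\otimes\cdots\otimes d_k\otimes b_0$. $V_{i,0}(\alpha_0)=\lambda(\alpha_0)$, $W_{i,0}(\alpha_0)=\lambda(\alpha_0)L_i$. *)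

(* Defs.v *)
From mathcomp Require Import all_boot all_order all_algebra.
From mathcomp Require Import reals complex.
From Stdlib Require Import ClassicalEpsilon.

Set Implicit Arguments.
Unset Strict Implicit.
Unset Printing Implicit Defensive.

Import Order.TTheory GRing.Theory Num.Theory.
Local Open Scope ring_scope.

Definition cmod (R : realType) (c : R[i]) : R := ComplexField.Normc.normc c.

Record banach_algebra (R : realType) := BanachAlgebra {
  ba_carrier :> algType R[i];
  ba_norm : ba_carrier -> R;
  ba_norm_ge0 : forall x, 0 <= ba_norm x;
  ba_norm_eq0 : forall x, ba_norm x = 0 -> x = 0;
  ba_normD : forall x y, ba_norm (x + y) <= ba_norm x + ba_norm y;
  ba_normZ : forall (c : R[i]) x, ba_norm (c *: x) = cmod c * ba_norm x;
  ba_normM : forall x y, ba_norm (x * y) <= ba_norm x * ba_norm y;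
  ba_norm1 : ba_norm 1 = 1;
  ba_complete : forall u : nat -> ba_carrier,
    (forall e : R, 0 < e -> exists K : nat, forall m n : nat,
        (K <= m)%N -> (K <= n)%N -> ba_norm (u m - u n) < e) ->
    exists l : ba_carrier, forall e : R, 0 < e -> exists K : nat,
        forall n : nat, (K <= n)%N -> ba_norm (u n - l) < e
}.

Arguments ba_norm {R} b _.

Section BNCPS.
Variable R : realType.
Variables (A B : banach_algebra R).

Definition invertible (b : B) : Prop := exists c : B, c * b = 1 /\ b * c = 1.

(* (A,E) is a B-valued Banach noncommutative probability space, where the
   isometric copy of B inside A is given by the embedding [iota]. *)
Definition bncps (iota : B -> A) (E : A -> B) : Prop :=
     (forall (c : R[i]) (x y : B), iota (c *: x + y) = c *: iota x + iota y)
  /\ (forall x y : B, iota (x * y) = iota x * iota y)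
  /\ iota 1 = 1
  /\ (forall x : B, ba_norm A (iota x) = ba_norm B x)
  /\ (forall (c : R[i]) (x y : A), E (c *: x + y) = c *: E x + E y)
  /\ (exists M : R, forall x : A, ba_norm B (E x) <= M * ba_norm A x)
  /\ (forall b : B, E (iota b) = b)
  /\ (forall (b1 b2 : B) (x : A), E (iota b1 * x * iota b2) = b1 * E x * b2).

End BNCPS.

Section Multilinear.
Variable R : realType.
Variable B : banach_algebra R.

Definition upd (n : nat) (x : 'I_n -> B) (j : 'I_n) (y : B) : 'I_n -> B :=
  fun l => if l == j then y else x l.

Definition multilinear (n : nat) (f : ('I_n -> B) -> B) : Prop :=
  forall (x : 'I_n -> B) (j : 'I_n) (c : R[i]) (y z : B),
    f (upd x j (c *: y + z)) = c *: f (upd x j y) + f (upd x j z).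

Definition bounded_ml (n : nat) (f : ('I_n -> B) -> B) : Prop :=
  exists M : R, forall x : 'I_n -> B,
    ba_norm B (f x) <= M * \prod_(j < n) ba_norm B (x j).

Definition in_Bn (n : nat) (f : ('I_n -> B) -> B) : Prop :=
  multilinear f /\ bounded_ml f.

End Multilinear.

(* An elementary tensor d_1 (x) ... (x) d_k (x) b0 (k = 0 meaning b0 Omega)*)
(* is represented by [PT [:: d_1; ...; d_k] b0]; a vector obtained from *)
(* Omega by the operators below is a finite sum of elementary tensors,  *)
(* represented by a list.  All operators (lambda(b), L_i, V_{i,n},      *)
(* W_{i,n}) are given by the paper on elementary tensors and extended   *)
(* additively; P keeps the B Omega component.                           *)
Section Fock.
Variable R : realType.
Variable B : banach_algebra R.
Variable I : Type.

Record ptensor := PT { pt_d : seq (I -> B); pt_b : B }.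
Definition fvec := seq ptensor.

Definition Omega : fvec := [:: PT [::] 1].

Definition delta (i : I) : I -> B :=
  fun j => if excluded_middle_informative (j = i) then 1 else 0.

Definition lam_pt (b : B) (t : ptensor) : ptensor :=
  match pt_d t with
  | [::] => PT [::] (b * pt_b t)
  | d :: ds => PT ((fun j => b * d j) :: ds) (pt_b t)
  end.

Definition L_pt (i : I) (t : ptensor) : ptensor := PT (delta i :: pt_d t) (pt_b t).

Variable i : I.
(* alpha n : B_n(B) for n >= 1; alpha 0 plays the role of alpha_0 in B *)
Variable alpha : forall n : nat, ('I_n -> B) -> B.

Definition coef (n : nat) (ds : seq (I -> B)) : B :=
  alpha (fun j : 'I_n => nth (fun _ => 0) ds j i).

Definition V_pt (n : nat) (t : ptensor) : fvec :=
  if (size (pt_d t) < n)%N then [::]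
  else [:: lam_pt (coef n (pt_d t)) (PT (drop n (pt_d t)) (pt_b t))].

Definition W_pt (n : nat) (t : ptensor) : fvec :=
  if (size (pt_d t) < n)%N then [::]
  else [:: lam_pt (coef n (pt_d t)) (L_pt i (PT (drop n (pt_d t)) (pt_b t)))].

Definition X_vec (N : nat) (v : fvec) : fvec :=
  flatten [seq flatten [seq V_pt n t ++ W_pt n t | n <- iota 0 N.+1] | t <- v].

Definition lam_vec (b : B) (v : fvec) : fvec := map (lam_pt b) v.

Definition P_vec (v : fvec) : B := \sum_(t <- v | size (pt_d t) == 0%N) pt_b t.

(* calE(b_0 X b_1 X ... b_k X) = P(lambda(b_0) X lambda(b_1) X ... lambda(b_k) X Omega) *)
Definition fock_moment (N : nat) (bs : seq B) : B :=
  P_vec (foldr (fun b v => lam_vec b (X_vec N v)) Omega bs).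

End Fock.

(* Main.v *)
Require Import Defs.
From mathcomp Require Import all_boot all_order all_algebra.
From mathcomp Require Import reals complex.
From mathcomp Require Import zify ring.
From Stdlib Require Import ClassicalEpsilon.

Set Implicit Arguments.
Unset Strict Implicit.
Unset Printing Implicit Defensive.
Import Order.TTheory GRing.Theory Num.Theory.
Local Open Scope ring_scope.

Section Abs.
Variable (R : realType) (B : banach_algebra R) (N : nat) (g : nat -> seq B -> B).

Definition st := (seq B * B)%type.

Definition alam (b : B) (t : st) : st :=
  match t.1 with [::] => ([::], b * t.2) | d :: ds => (b * d :: ds, t.2) end.
Definition aV n (t : st) : seq st :=
  if (size t.1 < n)%N then [::] else [:: alam (g n (take n t.1)) (drop n t.1, t.2)].
Definition aW n (t : st) : seq st :=
  if (size t.1 < n)%N then [::] else [:: alam (g n (take n t.1)) (1 :: drop n t.1, t.2)].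
Definition aX1 (t : st) : seq st := flatten [seq aV n t ++ aW n t | n <- iota 0 N.+1].
Definition aX (v : seq st) : seq st := flatten [seq aX1 t | t <- v].
Definition alamv b (v : seq st) := map (alam b) v.
Definition aP (v : seq st) : B := \sum_(t <- v | size t.1 == 0%N) t.2.
Definition aOm : seq st := [:: ([::], 1)].
Definition step (b : B) (v : seq st) := alamv b (aX v).
Definition afold (bs : seq B) := foldr step aOm bs.

Lemma all_flatten T (P : pred T) (ss : seq (seq T)) : all P (flatten ss) = all (all P) ss.
Proof. by elim: ss => //= s ss IH; rewrite all_cat IH. Qed.

Lemma aX_cons t v : aX (t :: v) = aX1 t ++ aX v.
Proof. by []. Qed.
Lemma aX_cat v w : aX (v ++ w) = aX v ++ aX w.
Proof. by rewrite /aX map_cat flatten_cat. Qed.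

Lemma size_alam b t : size (alam b t).1 = size t.1.
Proof. by rewrite /alam; case: t.1. Qed.

Lemma aX1_size t : all (fun s : st => (size s.1 <= (size t.1).+1)%N) (aX1 t).
Proof.
rewrite /aX1 all_flatten all_map; apply/allP => n _ /=.
rewrite all_cat /aV /aW; case: ltnP => //= H; rewrite !size_alam /= size_drop andbT.
apply/andP; split; first by apply: (leq_trans (leq_subr _ _)).
by rewrite ltnS leq_subr.
Qed.

Lemma afold_size bs : all (fun s : st => (size s.1 <= size bs)%N) (afold bs).
Proof.
elim: bs => [|b bs IH] /=; first by [].
rewrite /step /alamv all_map; apply/allP => s /=; rewrite size_alam.
move=> Hs; have: all (fun s : st => (size s.1 <= (size bs).+1)%N) (aX (afold bs)).
  rewrite /aX all_flatten all_map; apply/allP => t Ht.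
  move/allP: IH => /(_ t Ht) Ht'.
  apply/allP => u /(allP (aX1_size t)) Hu; apply: (leq_trans Hu); by rewrite ltnS.
by move/allP => /(_ s Hs).
Qed.

Lemma aP_cat v w : aP (v ++ w) = aP v + aP w.
Proof. by rewrite /aP big_cat. Qed.

Lemma aP_lam b v : aP (alamv b v) = b * aP v.
Proof.
rewrite /aP /alamv big_map mulr_sumr; apply: congr_big => //.
  by move=> t; rewrite size_alam.
by case=> [[|d ds] c] //= _.
Qed.

Lemma aP_flatten ss : aP (flatten ss) = \sum_(s <- ss) aP s.
Proof. by elim: ss => [|s ss IH]; rewrite ?big_nil ?big_cons /aP ?big_nil // big_cat -IH. Qed.

Lemma aP1 (x : st) : aP [:: x] = if size x.1 == 0%N then x.2 else 0.
Proof. by rewrite /aP big_cons big_nil; case: ifP; rewrite ?addr0. Qed.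

Lemma aP_aW n t : aP (aW n t) = 0.
Proof. by rewrite /aW; case: ifP => _; rewrite ?aP1 ?size_alam //= /aP big_nil. Qed.

Lemma aP_aV n t : aP (aV n t) = if size t.1 == n then g n t.1 * t.2 else 0.
Proof.
rewrite /aV; case: ltnP => H.
  by rewrite /aP big_nil; case: eqP => // E; rewrite E ltnn in H.
rewrite aP1 size_alam /= size_drop subn_eq0.
case: eqP => [E|NE].
  by rewrite E leqnn drop_oversize ?E // take_oversize ?E.
by case: leqP => // H2; case: NE; apply/eqP; rewrite eqn_leq H2 H.
Qed.

Lemma sum_iota_if (X : B) k m M :
  \sum_(n <- iota m M) (if k == n then X else 0) = if (m <= k < m + M)%N then X else 0.
Proof.
elim: M m => [|M IH] m.
  by rewrite big_nil addn0 ltnNge andbN.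
rewrite /= big_cons IH; case: eqP => [->|NE].
  by rewrite leqnn /= addnS ltnS leq_addr ltnn /= addr0.
rewrite add0r addSnnS; congr (if _ then _ else _).
rewrite [(m <= k)%N]leq_eqVlt; case: (m =P k) => [E|_] //=; by case: NE.
Qed.

Lemma aP_aX1 t : aP (aX1 t) = if (size t.1 <= N)%N then g (size t.1) t.1 * t.2 else 0.
Proof.
rewrite /aX1 aP_flatten big_map.
rewrite (eq_bigr (fun n => if size t.1 == n then g (size t.1) t.1 * t.2 else 0)); last first.
  by move=> n _; rewrite aP_cat aP_aW addr0 aP_aV; case: eqP => // ->.
by rewrite sum_iota_if add0n ltnS.
Qed.

Lemma aP_aX v : aP (aX v) = \sum_(t <- v) (if (size t.1 <= N)%N then g (size t.1) t.1 * t.2 else 0).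
Proof. by rewrite /aX aP_flatten big_map; apply: eq_bigr => t _; rewrite aP_aX1. Qed.

Lemma filter_nil_all T (p : pred T) s : all (predC p) s -> [seq x <- s | p x] = [::].
Proof. by elim: s => //= x s IH /andP[/negbTE -> /IH]. Qed.

Definition c0 := g 0 [::] * 1.

Lemma aX1_top t : [seq s <- aX1 t | size s.1 == (size t.1).+1] = [:: (c0 :: t.1, t.2)].
Proof.
rewrite /aX1 /= size_alam take0 drop0 /= eqn_leq ltnn /= eqxx /= filter_nil_all; first by rewrite andbF.
rewrite all_flatten all_map; apply/allP => n /=; rewrite mem_iota => /andP[Hn _].
rewrite all_cat /aV /aW; case: ifP => //= Hs; rewrite !size_alam /= size_drop !andbT; apply/andP; split; apply/eqP; lia.


Qed.

Lemma aX_top v m : all (fun s : st => (size s.1 <= m)%N) v ->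
  [seq s <- aX v | size s.1 == m.+1] = [seq (c0 :: t.1, t.2) | t <- [seq t <- v | size t.1 == m]].
Proof.
elim: v => [|t v IH]; first by [].
move=> /andP[Ht Hv].
rewrite aX_cons filter_cat IH //.
case: (size t.1 =P m) => [Em|NE].
  by rewrite -Em aX1_top /= eqxx.
have -> : [seq t0 <- t :: v | size t0.1 == m] = [seq t0 <- v | size t0.1 == m] by rewrite /= (introF eqP NE).
rewrite filter_nil_all //; apply/allP => s Hs /=.
have := allP (aX1_size t) s Hs => /= H; apply/negP => /eqP E.
rewrite E in H; case: NE; apply/eqP; rewrite eqn_leq Ht; by [].
Qed.

Lemma afold_top bs : [seq s <- afold bs | size s.1 == size bs] = [:: (map (fun y => y * c0) bs, 1)].
Proof.
elim: bs => [|b bs IH] //=.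
rewrite /step /alamv filter_map.
rewrite (eq_filter (a2 := fun s : st => size s.1 == (size bs).+1)); last by move=> s /=; rewrite /preim /= size_alam.
by rewrite aX_top ?afold_size // IH.
Qed.


Definition goodf (F : st -> B) :=
  (forall ds1 ds2 b c y z, F (ds1 ++ (c *: y + z) :: ds2, b)
      = c *: F (ds1 ++ y :: ds2, b) + F (ds1 ++ z :: ds2, b)) /\
  (forall ds c y z, F (ds, c *: y + z) = c *: F (ds, y) + F (ds, z)).

Definition mlin (f : seq B -> B) := forall l1 l2 c y z,
  f (l1 ++ (c *: y + z) :: l2) = c *: f (l1 ++ y :: l2) + f (l1 ++ z :: l2).

Lemma mulrZr (x y : B) c : x * (c *: y) = c *: (x * y).
Proof. by rewrite -scalerCA scalerAl. Qed.

Lemma lin_mull (x : B) c y z : (c *: y + z) * x = c *: (y * x) + z * x.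
Proof. by rewrite mulrDl -scalerAl. Qed.

Lemma lin_mulr (x : B) c y z : x * (c *: y + z) = c *: (x * y) + x * z.
Proof. by rewrite mulrDr mulrZr. Qed.

Lemma good_ext F1 F2 : goodf F1 -> (forall t, F1 t = F2 t) -> goodf F2.
Proof. by move=> [H1 H2] E; split => *; rewrite -!E. Qed.

Lemma good0 : goodf (fun _ => 0).
Proof. by split => *; rewrite scaler0 addr0. Qed.

Lemma goodD F1 F2 : goodf F1 -> goodf F2 -> goodf (fun t => F1 t + F2 t).
Proof.
move=> [H1 H2] [K1 K2]; split => *; rewrite ?H1 ?H2 ?K1 ?K2 scalerDr;
  rewrite -!addrA; congr (_ + _); rewrite addrCA; by [].
Qed.

Lemma good_big T (r : seq T) (F : T -> st -> B) :
  (forall x, goodf (F x)) -> goodf (fun t => \sum_(x <- r) F x t).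
Proof.
move=> H; elim: r => [|x r IH].
  by apply: good_ext good0 _ => t; rewrite big_nil.
by apply: good_ext (goodD (H x) IH) _ => t; rewrite big_cons.
Qed.

Lemma good_alam_lin F : goodf F -> forall s c u w,
  F (alam (c *: u + w) s) = c *: F (alam u s) + F (alam w s).
Proof.
move=> [H1 H2] [[|d ds] b] c u w /=; rewrite /alam /=.
  by rewrite lin_mull H2.
by rewrite lin_mull (H1 [::]).
Qed.

Lemma good_alam F b : goodf F -> goodf (fun t => F (alam b t)).
Proof.
move=> [H1 H2]; split.
  move=> [|d ds1] ds2 bb c y z; rewrite /alam /=.
    by rewrite lin_mulr (H1 [::]).
  by rewrite (H1 (b * d :: ds1)).
move=> [|d ds] c y z; rewrite /alam /=.
  by rewrite lin_mulr H2.
by rewrite H2.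
Qed.

Lemma take_mid n (ds1 ds2 : seq B) x : (size ds1 < n)%N ->
  take n (ds1 ++ x :: ds2) = ds1 ++ x :: take (n - (size ds1).+1) ds2.
Proof.
move=> H; rewrite take_cat ltnNge ltnW //=.
by rewrite -(subnSK H).
Qed.

Lemma drop_mid n (ds1 ds2 : seq B) x : (size ds1 < n)%N ->
  drop n (ds1 ++ x :: ds2) = drop (n - (size ds1).+1) ds2.
Proof.
move=> H; rewrite drop_cat ltnNge ltnW //=.
by rewrite -(subnSK H).
Qed.

Lemma drop_le n (ds1 ds2 : seq B) : (n <= size ds1)%N ->
  drop n (ds1 ++ ds2) = drop n ds1 ++ ds2.
Proof.
move=> H; rewrite drop_cat; case: ltnP => // H'.
have E : n = size ds1 by apply/eqP; rewrite eqn_leq H H'.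
by rewrite E subnn drop0 drop_size.
Qed.

Lemma good_VW F n (pre : seq B) : goodf F -> (0 < n -> mlin (g n))%N ->
  goodf (fun t => if (size t.1 < n)%N then 0
                  else F (alam (g n (take n t.1)) (pre ++ drop n t.1, t.2))).
Proof.
move=> HF Hg; have [H1 H2] := HF; have [K1 K2] := good_alam (g 0 [::]) HF.
split.
  move=> ds1 ds2 b c y z /=; rewrite !size_cat /=.
  case: ltnP => Hs; first by rewrite scaler0 addr0.
  case: (ltnP (size ds1) n) => Hp.
    rewrite !take_mid // !drop_mid //.
    have Hn : (0 < n)%N by apply: leq_ltn_trans Hp.
    by rewrite (Hg Hn) good_alam_lin.
  rewrite !takel_cat // !drop_le //.
  have [L1 L2] := good_alam (g n (take n ds1)) HF.
  by rewrite !catA L1.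
move=> ds c y z /=; case: ltnP => Hs; first by rewrite scaler0 addr0.
by have [L1 L2] := good_alam (g n (take n ds)) HF; rewrite L2.
Qed.

Lemma sum_aV (F : st -> B) n t : \sum_(s <- aV n t) F s = if (size t.1 < n)%N then 0
   else F (alam (g n (take n t.1)) ([::] ++ drop n t.1, t.2)).
Proof. by rewrite /aV; case: ifP => _; rewrite ?big_nil ?big_seq1. Qed.

Lemma sum_aW (F : st -> B) n t : \sum_(s <- aW n t) F s = if (size t.1 < n)%N then 0
   else F (alam (g n (take n t.1)) ([:: 1] ++ drop n t.1, t.2)).
Proof. by rewrite /aW; case: ifP => _; rewrite ?big_nil ?big_seq1. Qed.

Hypothesis gml : forall n, (0 < n)%N -> mlin (g n).

Lemma good_X1 F : goodf F -> goodf (fun t => \sum_(s <- aX1 t) F s).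
Proof.
move=> HF.
pose G := fun n (t : st) =>
   (if (size t.1 < n)%N then 0
   else F (alam (g n (take n t.1)) ([::] ++ drop n t.1, t.2))) +
   (if (size t.1 < n)%N then 0
   else F (alam (g n (take n t.1)) ([:: 1] ++ drop n t.1, t.2))).
have HG : goodf (fun t => \sum_(n <- iota 0 N.+1) G n t).
  by apply: good_big => n; apply: goodD; apply: good_VW => // /gml.
apply: (good_ext HG).
by move=> t; rewrite /aX1 big_flatten big_map; apply: eq_bigr => n _; rewrite big_cat sum_aV sum_aW.
Qed.

Lemma sum_aX (V : nmodType) (F : st -> V) v : \sum_(s <- aX v) F s = \sum_(t <- v) \sum_(s <- aX1 t) F s.
Proof. by rewrite /aX big_flatten big_map. Qed.

Lemma fold_good F bs : goodf F -> exists F', goodf F' /\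
  forall v, \sum_(s <- foldr step v bs) F s = \sum_(t <- v) F' t.
Proof.
elim: bs F => [|b bs IH] F HF; first by exists F.
have HF1 := good_X1 (good_alam b HF).
have [F' [HF' E]] := IH _ HF1.
exists F'; split => // v.
by rewrite /= /step /alamv big_map sum_aX E.
Qed.

Lemma fold_mlin F : goodf F -> mlin (fun bs => \sum_(s <- afold bs) F s).
Proof.
move=> HF l1 l2 c y z; rewrite /afold !foldr_cat.
have [F' [HF' E]] := fold_good l1 HF.
rewrite !E /= /step /alamv !big_map.
rewrite scaler_sumr -big_split /=; apply: eq_bigr => t _.
by rewrite good_alam_lin.
Qed.


Definition nB (x : B) := ba_norm B x.
Definition tn (t : st) := \prod_(d <- t.1) nB d * nB t.2.
Definition vn (v : seq st) := \sum_(t <- v) tn t.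

Lemma nB_ge0 x : 0 <= nB x. Proof. exact: ba_norm_ge0. Qed.
Lemma prod_ge0 (l : seq B) : 0 <= \prod_(d <- l) nB d.
Proof. by apply: prodr_ge0 => *; apply: nB_ge0. Qed.
Lemma tn_ge0 t : 0 <= tn t.
Proof. by apply: mulr_ge0; [apply: prod_ge0|apply: nB_ge0]. Qed.
Lemma vn_ge0 v : 0 <= vn v.
Proof. by apply: sumr_ge0 => *; apply: tn_ge0. Qed.

Lemma nB0 : nB 0 = 0.
Proof.
rewrite /nB -(scale0r (0 : B)) ba_normZ /cmod /ComplexField.Normc.normc /=.
by rewrite expr0n /= addr0 sqrtr0 mul0r.
Qed.

Lemma nB_sum T (r : seq T) (F : T -> B) : nB (\sum_(x <- r) F x) <= \sum_(x <- r) nB (F x).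
Proof.
elim: r => [|x r IH]; first by rewrite !big_nil nB0.
rewrite !big_cons; apply: le_trans (ba_normD _ _) _; exact: lerD.
Qed.

Lemma nBM x y : nB (x * y) <= nB x * nB y. Proof. exact: ba_normM. Qed.

Lemma tn_alam c t : tn (alam c t) <= nB c * tn t.
Proof.
case: t => [[|d ds] b]; rewrite /alam /tn /= ?big_nil ?big_cons ?mul1r.
  by rewrite nBM.
rewrite -!mulrA [X in _ <= X]mulrA; apply: ler_wpM2r; first by apply: mulr_ge0; [apply: prod_ge0|apply: nB_ge0].
exact: nBM.
Qed.

Lemma vn_cat v w : vn (v ++ w) = vn v + vn w. Proof. by rewrite /vn big_cat. Qed.
Lemma vn1 t : vn [:: t] = tn t. Proof. by rewrite /vn big_seq1. Qed.
Lemma vn_nil : vn [::] = 0. Proof. by rewrite /vn big_nil. Qed.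

Variable C : R.
Hypothesis C0 : 0 <= C.
Hypothesis gbd : forall n l, size l = n -> nB (g n l) <= C * \prod_(d <- l) nB d.

Lemma prod_take_drop n (l : seq B) :
  \prod_(d <- l) nB d = \prod_(d <- take n l) nB d * \prod_(d <- drop n l) nB d.
Proof. by rewrite -big_cat cat_take_drop. Qed.

Lemma vn_aVW n t (pre : seq B) : \prod_(d <- pre) nB d <= 1 ->
  vn (if (size t.1 < n)%N then [::] else [:: alam (g n (take n t.1)) (pre ++ drop n t.1, t.2)])
  <= C * tn t.
Proof.
move=> Hpre; case: ltnP => H.
  by rewrite vn_nil; apply: mulr_ge0 => //; apply: tn_ge0.
rewrite vn1; apply: le_trans (tn_alam _ _) _.
have Hs : size (take n t.1) = n by rewrite size_take; case: ltnP => // h; apply/eqP; rewrite eqn_leq h H.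
apply: le_trans (ler_wpM2r (tn_ge0 _) (gbd Hs)) _.
rewrite /tn /= big_cat /= (prod_take_drop n t.1) !mulrA.
rewrite -!mulrA; apply: ler_wpM2l => //.
apply: ler_wpM2l; first exact: prod_ge0.
rewrite -[X in _ <= X]mul1r; apply: ler_wpM2r => //.
by apply: mulr_ge0; [apply: prod_ge0|apply: nB_ge0].
Qed.

Definition KX := \sum_(n <- iota 0 N.+1) (C + C).
Lemma KX_ge0 : 0 <= KX.
Proof. by apply: sumr_ge0 => *; apply: addr_ge0. Qed.

Lemma vn_aX1 t : vn (aX1 t) <= KX * tn t.
Proof.
rewrite /aX1 /vn big_flatten big_map /KX mulr_suml; apply: ler_sum => n _.
rewrite big_cat mulrDl; apply: lerD.
  have := vn_aVW n t (pre := [::]); rewrite big_nil lexx => /(_ isT).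
  by rewrite /vn /aV.
have := vn_aVW n t (pre := [:: 1]); rewrite big_seq1 /nB ba_norm1 lexx => /(_ isT).
by rewrite /vn /aW.
Qed.

Lemma vn_aX v : vn (aX v) <= KX * vn v.
Proof.
rewrite /vn (sum_aX tn) mulr_sumr; apply: ler_sum => t _; exact: vn_aX1.
Qed.

Lemma vn_lam b v : vn (alamv b v) <= nB b * vn v.
Proof.
rewrite /vn /alamv big_map mulr_sumr; apply: ler_sum => t _; exact: tn_alam.
Qed.

Lemma vn_afold bs : vn (afold bs) <= KX ^+ size bs * \prod_(b <- bs) nB b.
Proof.
elim: bs => [|b bs IH].
  by rewrite /= /vn big_seq1 /tn /= big_nil /nB ba_norm1 !mul1r.
rewrite /= /step; apply: le_trans (vn_lam _ _) _.
apply: le_trans (ler_wpM2l (nB_ge0 b) (vn_aX _)) _.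
apply: le_trans (ler_wpM2l (nB_ge0 b) (ler_wpM2l KX_ge0 IH)) _.
rewrite big_cons exprS. have -> : nB b * (KX * (KX ^+ size bs * \prod_(b0 <- bs) nB b0)) = KX * KX ^+ size bs * (nB b * \prod_(b0 <- bs) nB b0) by ring. by [].
Qed.

Lemma sum_bound (F : st -> B) D v : (forall t, nB (F t) <= D * tn t) -> 0 <= D ->
  nB (\sum_(t <- v) F t) <= D * vn v.
Proof.
move=> HF D0; apply: le_trans (nB_sum _ _) _.
rewrite /vn mulr_sumr; apply: ler_sum => t _; exact: HF.
Qed.


Definition Phik k (t : st) := if (size t.1 < k)%N then g (size t.1) t.1 * t.2 else 0.
Definition Rk k bs := \sum_(t <- afold bs) Phik k t.

Lemma Phik_good k : goodf (Phik k).
Proof.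
split.
  move=> ds1 ds2 b c y z; rewrite /Phik /= !size_cat /=.
  case: ifP => _; last by rewrite scaler0 addr0.
  by rewrite gml ?addnS // lin_mull.
move=> ds c y z; rewrite /Phik /=; case: ifP => _; last by rewrite scaler0 addr0.
by rewrite lin_mulr.
Qed.

Lemma Phik_bound k t : nB (Phik k t) <= C * tn t.
Proof.
rewrite /Phik; case: ifP => _; last by rewrite nB0; apply: mulr_ge0 => //; apply: tn_ge0.
apply: le_trans (nBM _ _) _; rewrite /tn mulrA; apply: ler_wpM2r; first exact: nB_ge0.
exact: gbd.
Qed.

Lemma Rk_mlin k : mlin (Rk k).
Proof. exact: (fold_mlin (Phik_good k)). Qed.

Lemma Rk_bound k bs : nB (Rk k bs) <= C * (KX ^+ size bs * \prod_(b <- bs) nB b).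
Proof.
apply: le_trans (sum_bound (afold bs) (@Phik_bound k) C0) _.
by apply: ler_wpM2l => //; apply: vn_afold.
Qed.

End Abs.

Lemma decomp (R : realType) (B : banach_algebra R) N (g : nat -> seq B -> B) k (b0 : B) bs : (0 < k <= N)%N -> size bs = k ->
  aP (afold N g (b0 :: bs)) = b0 * (g k (map (fun y => y * c0 g) bs) * 1 + Rk N g k bs).
Proof.
move=> /andP[k0 kN] Hs.
rewrite /= /step aP_lam aP_aX; congr (_ * _).
rewrite (bigID (fun t : st B => size t.1 == k)) /=; congr (_ + _).
  by rewrite -big_filter -Hs afold_top big_seq1 /= size_map Hs kN.
rewrite /Rk [RHS](bigID (fun t : st B => size t.1 == k)) /=.
rewrite [X in _ = X + _]big1 ?add0r; last by move=> t /eqP E; rewrite /Phik E ltnn.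
rewrite big_seq_cond [RHS]big_seq_cond; apply: eq_bigr => t /andP[Ht Hne].
have Hle := allP (afold_size N g bs) t Ht; rewrite /= Hs in Hle.
have Hlt : (size t.1 < k)%N by rewrite ltn_neqAle Hne Hle.
by rewrite /Phik Hlt (leq_trans (ltnW Hlt) kN).
Qed.


Lemma afold_ext (R : realType) (B : banach_algebra R) N (g1 g2 : nat -> seq B -> B) bs :
  (forall n l, (n < size bs)%N -> g1 n l = g2 n l) -> afold N g1 bs = afold N g2 bs.
Proof.
elim: bs => [|b bs IH] H //=.
rewrite /step IH; last by move=> n l h; apply: H; apply: ltn_trans h _.
congr alamv; rewrite /aX; congr flatten; apply/eq_in_map => t Ht.
have Hle := allP (afold_size N g2 bs) t Ht.
rewrite /aX1; congr flatten; apply: eq_map => n; rewrite /aV /aW; case: ltnP => // h.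
by rewrite H //; apply: leq_ltn_trans h _.
Qed.

Lemma Rk_ext (R : realType) (B : banach_algebra R) N (g1 g2 : nat -> seq B -> B) k bs :
  (forall n l, (n < k)%N -> g1 n l = g2 n l) -> (size bs <= k)%N -> Rk N g1 k bs = Rk N g2 k bs.
Proof.
move=> H Hs; rewrite /Rk (@afold_ext _ _ N g1 g2); last first.
  by move=> n l h; apply: H; apply: leq_trans h Hs.
by apply: eq_bigr => t _; rewrite /Phik; case: ifP => // h; rewrite H.
Qed.

Section Bridge.
Variables (R : realType) (B : banach_algebra R) (I : Type) (i : I) (N : nat).
Variable gam : nat -> seq B -> B.
Definition alph n (x : 'I_n -> B) : B := gam n [seq x j | j <- enum 'I_n].

Definition abs (t : ptensor B I) : st B := (map (fun d => d i) (pt_d t), pt_b t).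

Lemma coefE n ds : (n <= size ds)%N -> coef i alph n ds = gam n (take n (map (fun d => d i) ds)).
Proof.
move=> H; rewrite /coef /alph; congr (gam n _).
rewrite -(map_nth_iota0 0) ?size_map // -val_enum_ord -map_comp.
apply/eq_in_map => j _ /=; rewrite (nth_map (fun _ => 0)) //.
by apply: leq_trans (ltn_ord j) H.
Qed.

Lemma abs_lam b t : abs (lam_pt b t) = alam b (abs t).
Proof. by case: t => [[|d ds] b0]. Qed.

Lemma abs_V n t : map abs (V_pt i alph n t) = aV gam n (abs t).
Proof.
rewrite /V_pt /aV /= size_map; case: ltnP => // H.
by rewrite /= abs_lam coefE // /abs /= map_drop.
Qed.

Lemma abs_W n t : map abs (W_pt i alph n t) = aW gam n (abs t).
Proof.
rewrite /W_pt /aW /= size_map; case: ltnP => // H.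
rewrite /= abs_lam coefE // /abs /= map_drop /delta.
by case: excluded_middle_informative.
Qed.

Lemma abs_X v : map abs (X_vec i alph N v) = aX N gam (map abs v).
Proof.
rewrite /X_vec /aX map_flatten -!map_comp; congr flatten; apply: eq_map => t.
rewrite /comp map_flatten -map_comp /aX1; congr flatten; apply: eq_map => n.
by rewrite /comp map_cat abs_V abs_W.
Qed.

Lemma abs_P v : P_vec v = aP (map abs v).
Proof. by rewrite /P_vec /aP big_map; apply: eq_bigl => t; rewrite /abs /= size_map. Qed.

Lemma fock_abs bs : fock_moment i alph N bs = aP (afold N gam bs).
Proof.
rewrite /fock_moment abs_P; congr aP.
elim: bs => [|b bs IH] //=.
by rewrite /lam_vec /step /alamv -map_comp (eq_map (abs_lam b)) map_comp abs_X IH.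
Qed.

End Bridge.

Section Constr.
Variables (R : realType) (A B : banach_algebra R) (iota : B -> A) (E : A -> B) (a : A) (N : nat) (cinv : B).

Definition Fm (l : seq B) : B := E (a * \prod_(y <- l) (iota y * a)).
Definition mapc (l : seq B) := map (fun y => y * cinv) l.

Fixpoint G k : nat -> seq B -> B :=
  match k with
  | 0 => fun n _ => if n == 0%N then E a else 0
  | k'.+1 => fun n l => if n == k'.+1 then Fm (mapc l) - Rk N (G k') k'.+1 (mapc l) else G k' n l
  end.

Lemma G_le k d n l : (n <= k)%N -> G (k + d) n l = G k n l.
Proof.
move=> H; elim: d => [|d IH]; first by rewrite addn0.
rewrite addnS /=; case: eqP => [E'|_] //.
by move: H; rewrite E' ltnNge leq_addr.
Qed.

Lemma G_le' k m n l : (n <= k)%N -> (k <= m)%N -> G m n l = G k n l.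
Proof. by move=> H1 H2; rewrite -(subnKC H2) G_le. Qed.

Lemma G_gt k n l : (k < n)%N -> G k n l = 0.
Proof.
elim: k => [|k IH] H /=; first by case: n H.
case: eqP => [E'|_]; first by move: H; rewrite E' ltnn.
by apply: IH; apply: ltn_trans H.
Qed.

Lemma G_0 k l : G k 0 l = E a.
Proof. by elim: k => //= k IH. Qed.

Lemma mlin_mapc f : mlin f -> mlin (fun l => f (mapc l)).
Proof. by move=> H l1 l2 c y z; rewrite /mapc !map_cat /= lin_mull H. Qed.

Lemma mlin_sub f1 f2 : mlin f1 -> mlin f2 -> mlin (fun l : seq B => f1 l - f2 l).
Proof. by move=> H1 H2 l1 l2 c y z; rewrite H1 H2 scalerBr opprD addrACA. Qed.

Lemma mlin0 : mlin (fun _ : seq B => 0).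
Proof. by move=> *; rewrite scaler0 addr0. Qed.

Hypothesis iota_lin : forall (c : R[i]) (x y : B), iota (c *: x + y) = c *: iota x + iota y.
Hypothesis E_lin : forall (c : R[i]) (x y : A), E (c *: x + y) = c *: E x + E y.

Lemma Fm_mlin : mlin Fm.
Proof.
move=> l1 l2 c y z; rewrite /Fm !big_cat !big_cons /=.
by rewrite iota_lin lin_mull lin_mull lin_mulr lin_mulr E_lin.
Qed.

Lemma G_mlin k n : (0 < n)%N -> mlin (G k n).
Proof.
elim: k n => [|k IH] n Hn /=.
  by case: n Hn => // n _; exact: mlin0.
case: eqP => [_|_]; last exact: IH.
apply: mlin_sub; first exact: mlin_mapc Fm_mlin.
apply: mlin_mapc; apply: Rk_mlin; exact: IH.
Qed.


Lemma cmodN1 : cmod (-1 : R[i]) = 1.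
Proof. by rewrite /cmod /ComplexField.Normc.normc /= oppr0 sqrrN expr1n expr0n /= addr0 sqrtr1. Qed.

Lemma nB_sub (x y : B) : nB (x - y) <= nB x + nB y.
Proof.
apply: le_trans (ba_normD _ _) _; apply: lerD => //.
by rewrite -scaleN1r ba_normZ cmodN1 mul1r.
Qed.

Variable ME : R.
Hypothesis ME0 : 0 <= ME.
Hypothesis E_bd : forall x, nB (E x) <= ME * nB x.
Hypothesis iota_iso : forall x, nB (iota x) = nB x.

Lemma prod_mapc_bd l : \prod_(d <- mapc l) nB d <= nB cinv ^+ size l * \prod_(y <- l) nB y.
Proof.
elim: l => [|y l IH]; first by rewrite /= !big_nil mul1r.
rewrite /= !big_cons.
apply: le_trans (ler_pM (nB_ge0 _) (prod_ge0 _) (nBM y cinv) IH) _.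
by rewrite exprS le_eqVlt; apply/orP; left; apply/eqP; ring.
Qed.

Lemma prodA_bd l : nB (\prod_(y <- mapc l) (iota y * a))
   <= (nB cinv * nB a) ^+ size l * \prod_(y <- l) nB y.
Proof.
elim: l => [|y l IH].
  by rewrite /= !big_nil mul1r /nB ba_norm1.
rewrite /= !big_cons; apply: le_trans (nBM _ _) _.
have H1 : nB (iota (y * cinv) * a) <= nB y * nB cinv * nB a.
  apply: le_trans (nBM _ _) _; rewrite iota_iso; apply: ler_wpM2r; first exact: nB_ge0.
  exact: nBM.
apply: le_trans (ler_pM (nB_ge0 _) (nB_ge0 _) H1 IH) _.
rewrite exprS le_eqVlt; apply/orP; left; apply/eqP; ring.
Qed.

Lemma Fm_bd l : nB (Fm (mapc l)) <= ME * nB a * (nB cinv * nB a) ^+ size l * \prod_(y<-l) nB y.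
Proof.
apply: le_trans (E_bd _) _; rewrite -!mulrA; apply: ler_wpM2l => //.
apply: le_trans (nBM _ _) _; apply: ler_wpM2l; first exact: nB_ge0.
exact: prodA_bd.
Qed.

Lemma G_bound k : exists C, 0 <= C /\ forall n l, size l = n -> nB (G k n l) <= C * \prod_(d <- l) nB d.
Proof.
elim: k => [|k [C [C0 HC]]].
  exists (nB (E a)); split; first exact: nB_ge0.
  move=> [|n] l /= Hs.
    by rewrite (size0nil Hs) big_nil mulr1.
  by rewrite nB0; apply: mulr_ge0; [apply: nB_ge0|apply: prod_ge0].
pose D := ME * nB a * (nB cinv * nB a) ^+ k.+1 + C * (KX N C ^+ k.+1 * nB cinv ^+ k.+1).
have D0 : 0 <= D.
  apply: addr_ge0; first by rewrite !mulr_ge0 // ?exprn_ge0 // ?mulr_ge0 // nB_ge0.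
  by rewrite !mulr_ge0 // exprn_ge0 // ?KX_ge0 // nB_ge0.
exists (C + D); split; first exact: addr_ge0.
move=> n l Hs /=; case: eqP => [En|_].
  apply: le_trans (nB_sub _ _) _.
  have HP := prod_ge0 l.
  rewrite mulrDl; apply: le_trans (_ : _ <= D * \prod_(d <- l) nB d) _; last first.
    by rewrite lerDr mulr_ge0.
  rewrite /D mulrDl; apply: lerD.
    by have := Fm_bd l; rewrite Hs En.
  apply: le_trans (Rk_bound N C0 HC _ _) _.
  rewrite /mapc size_map Hs En -!mulrA; apply: ler_wpM2l => //.
  apply: ler_wpM2l; first by rewrite exprn_ge0 // KX_ge0.
  by have := prod_mapc_bd l; rewrite Hs En.
apply: le_trans (HC _ _ Hs) _; apply: ler_wpM2r; first exact: prod_ge0.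
by rewrite lerDl.
Qed.

End Constr.

Lemma map_upd (R : realType) (B : banach_algebra R) n (x : 'I_n -> B) (j : 'I_n) (w : B) :
  [seq upd x j w l | l <- enum 'I_n] =
  [seq x l | l <- take j (enum 'I_n)] ++ w :: [seq x l | l <- drop j.+1 (enum 'I_n)].
Proof.
have Hj : (j < size (enum 'I_n))%N by rewrite size_enum_ord.
rewrite -{1}(cat_take_drop j (enum 'I_n)) (drop_nth j Hj) nth_ord_enum map_cat /=.
rewrite {2}/upd eqxx; congr (_ ++ _ :: _).
  apply/eq_in_map => l Hl; rewrite /upd; case: eqP => // E.
  have : val l \in map val (take j (enum 'I_n)) by apply: map_f.
  rewrite map_take val_enum_ord take_iota mem_iota E /= add0n => H; exfalso; move: H; lia.
apply/eq_in_map => l Hl; rewrite /upd; case: eqP => // E.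
have : val l \in map val (drop j.+1 (enum 'I_n)) by apply: map_f.
rewrite map_drop val_enum_ord drop_iota mem_iota E /= add0n => H; exfalso; move: H; lia.
Qed.

Lemma big_enum_ord T (idx : T) op n (F : 'I_n -> T) :
  \big[op/idx]_(j <- enum 'I_n) F j = \big[op/idx]_(j < n) F j.
Proof. by rewrite [index_enum _]unlock -enumT. Qed.

Unset Implicit Arguments.
Set Strict Implicit.

Theorem mainTheorem9 (R : realType) (A B : banach_algebra R)
    (iota : B -> A) (E : A -> B) (I : Type) (i : I) (a : A) (N : nat) :
  bncps iota E ->
  invertible (E a) ->
  (0 < N)%N ->
  exists alpha : forall n : nat, ('I_n -> B) -> B,
    (forall v : 'I_0 -> B, alpha 0%N v = E a) /\
    (forall n : nat, (0 < n <= N)%N -> in_Bn (alpha n)) /\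
    (forall k : nat, (0 < k <= N)%N -> forall b : 'I_k.+1 -> B,
       fock_moment i alpha N [seq b j | j <- enum 'I_k.+1]
       = E (\prod_(j < k.+1) (iota (b j) * a))).
Proof.
move=> [iota_lin [iota_mul [iota1 [iota_iso [E_lin [[M HM] [Eproj Ebim]]]]]]] [cinv [Hc1 Hc2]] N0.
have M0 : 0 <= M.
  have := HM 1; rewrite ba_norm1 mulr1 => H; exact: le_trans (ba_norm_ge0 _) H.
pose gam := G iota E a N cinv N.
exists (alph gam); split.
  move=> v; rewrite /alph /gam.
  by rewrite G_0.
split.
  move=> n /andP[n0 nN]; split.
    move=> x j c y z; rewrite /alph !map_upd.
    exact: (G_mlin a N cinv iota_lin E_lin N n0).
  have [C [C0 HC]] := G_bound a N cinv M0 HM iota_iso N.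
  exists C => x; rewrite /alph.
  have := HC n [seq x j | j <- enum 'I_n]; rewrite size_map size_enum_ord => /(_ erefl).
  by rewrite big_map big_enum.
move=> k Hk b.
rewrite fock_abs enum_ordSl /= -map_comp.
have Hs : size [seq (b \o lift ord0) j | j <- enum 'I_k] = k by rewrite size_map size_enum_ord.
rewrite (decomp gam (b ord0) Hk Hs).
case/andP: Hk => k0 kN.
case: k k0 kN b Hs => // k _ kN b Hs.
rewrite /gam (G_le' iota E a N cinv _ (leqnn _) kN) /=.
rewrite eqxx.
set bs := [seq (b \o lift ord0) j | j <- enum 'I_k.+1].
have Hm : mapc cinv [seq y * c0 gam | y <- bs] = bs.
  rewrite /mapc -map_comp; rewrite -[RHS]map_id; apply: eq_map => y /=.
  by rewrite /c0 /gam G_0 mulr1 -mulrA Hc2 mulr1.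
rewrite Hm.
rewrite (@Rk_ext _ _ N _ (G iota E a N cinv N)); last by rewrite Hs.
  2: by move=> n l h; rewrite (G_le' iota E a N cinv l (_ : n <= k)%N) // ltnW.
rewrite mulr1 subrK /Fm big_ord_recl /bs big_map big_enum_ord /=.
by rewrite -[LHS]mulr1 -Ebim iota1 mulr1 mulrA.
Qed.
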